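(* Let $p\in\{q,q^{-1}\}$. Then the degree-zero part $\mathfrak{M}_{p,q}[D^{-1}]_0$ of the localization of $\mathfrak{M}_{p,q}$ at $D$ is isomorphic to $\mathfrak{M}^{\rm I}_q$ via $x_{rs'}\mapsto z_{rs'}/D$, and the degree-zero part $\mathfrak{M}_{p,q}[D'^{-1}]_0$ of the localization at $D'$ is isomorphic to $\mathfrak{M}^{\rm J}_q$ via $y_{rs'}\mapsto z_{rs'}/D'$ ($r,s=1,2$); in particular this holds independently of the choice $p=q$ or $p=q^{-1}$.
   Context: $q$ is a formal parameter. $\mathfrak{M}_{p,q}$ (the quantum compactified complexified Minkowski space) is the graded associative $\mathbb{C}$-algebra generated in degree one by $z_{11'},z_{12'},z_{21'},z_{22'},D,D'$ with relations: $z_{11'}z_{12'}=z_{12'}z_{11'}$, $z_{11'}z_{21'}=z_{21'}z_{11'}$, $z_{12'}z_{22'}=z_{22'}z_{12'}$, $z_{21'}z_{22'}=z_{22'}z_{21'}$, $z_{12'}z_{21'}=z_{21'}z_{12'}$; $q^{-1}(z_{11'}z_{22'}-z_{12'}z_{21'})=q(z_{22'}z_{11'}-z_{12'}z_{21'})$; $Dz_{11'}=pq^{-1}z_{11'}D$, $Dz_{12'}=pq^{-1}z_{12'}D$, $Dz_{21'}=pqz_{21'}D$, $Dz_{22'}=pqz_{22'}D$; $D'z_{11'}=p^{-1}q^{-1}z_{11'}D'$, $D'z_{12'}=p^{-1}qz_{12'}D'$, $D'z_{21'}=p^{-1}q^{-1}z_{21'}D'$, $D'z_{22'}=p^{-1}qz_{22'}D'$;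 $p^{-1}DD'=pD'D$; $q^{-1}(z_{11'}z_{22'}-z_{12'}z_{21'})=p^{-1}DD'$. The notation $z_{rs'}/D$ means $c_{rs'}^{-1/2}D^{-1}z_{rs'}=c_{rs'}^{1/2}z_{rs'}D^{-1}$ where $D^{-1}z_{rs'}=c_{rs'}z_{rs'}D^{-1}$ with $c_{rs'}$ a constant, and similarly for $z_{rs'}/D'$. $\mathfrak{M}^{\rm I}_q$ is the algebra generated by $x_{11'},x_{12'},x_{21'},x_{22'}$ with relations $x_{11'}x_{12'}=x_{12'}x_{11'}$, $x_{21'}x_{22'}=x_{22'}x_{21'}$, $[x_{11'},x_{22'}]+[x_{21'},x_{12'}]=0$, $x_{11'}x_{21'}=q^{-2}x_{21'}x_{11'}$, $x_{12'}x_{22'}=q^{-2}x_{22'}x_{12'}$, $x_{21'}x_{12'}=q^2x_{12'}x_{21'}$. $\mathfrak{M}^{\rm J}_q$ is the algebra generated by $y_{11'},y_{12'},y_{21'},y_{22'}$ with relations $y_{11'}y_{21'}=y_{21'}y_{11'}$, $y_{12'}y_{22'}=y_{22'}y_{12'}$, $[y_{11'},y_{22'}]+[y_{12'},y_{21'}]=0$, $y_{11'}y_{12'}=q^{-2}y_{12'}y_{11'}$, $y_{21'}y_{22'}=q^{-2}y_{22'}y_{21'}$, $y_{12'}y_{21'}=q^2y_{21'}y_{12'}$. *)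

(* Defs.v *)
From HB Require Import structures.
From mathcomp Require Import all_boot all_order all_algebra fraction.
From mathcomp Require Import complex.
From mathcomp Require Import Rstruct.
Set Implicit Arguments.
Unset Strict Implicit.
Unset Printing Implicit Defensive.
Import GRing.Theory.
Local Open Scope ring_scope.

Definition Cx := (Rdefinitions.R)[i].
Definition Kq := {fraction {poly Cx}}.
Definition qpar : Kq := FracField.tofrac ('X : {poly Cx}).

Definition i1 : 'I_2 := @ord0 1.
Definition i2 : 'I_2 := @ord_max 1.

Section Defs.
Variable K : fieldType.

Definition is_alg_hom (A B : algType K) (f : A -> B) : Prop :=
  [/\ (forall x y, f (x + y) = f x + f y),
      (forall x y, f (x * y) = f x * f y),
      f 1 = 1 &
      (forall (k : K) x, f (k *: x) = k *: f x)].

Definition MRel (p q : K) (B : algType K) (z : 'I_2 -> 'I_2 -> B) (D D' : B)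
  : Prop :=
  [/\ [/\ z i1 i1 * z i1 i2 = z i1 i2 * z i1 i1,
      z i1 i1 * z i2 i1 = z i2 i1 * z i1 i1,
      z i1 i2 * z i2 i2 = z i2 i2 * z i1 i2,
      z i2 i1 * z i2 i2 = z i2 i2 * z i2 i1 &
      z i1 i2 * z i2 i1 = z i2 i1 * z i1 i2],
      q^-1 *: (z i1 i1 * z i2 i2 - z i1 i2 * z i2 i1)
        = q *: (z i2 i2 * z i1 i1 - z i1 i2 * z i2 i1),
      [/\ D * z i1 i1 = (p * q^-1) *: (z i1 i1 * D),
          D * z i1 i2 = (p * q^-1) *: (z i1 i2 * D),
          D * z i2 i1 = (p * q) *: (z i2 i1 * D) &
          D * z i2 i2 = (p * q) *: (z i2 i2 * D)],
      [/\ D' * z i1 i1 = (p^-1 * q^-1) *: (z i1 i1 * D'),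
          D' * z i1 i2 = (p^-1 * q) *: (z i1 i2 * D'),
          D' * z i2 i1 = (p^-1 * q^-1) *: (z i2 i1 * D') &
          D' * z i2 i2 = (p^-1 * q) *: (z i2 i2 * D')] &
      p^-1 *: (D * D') = p *: (D' * D) /\
      q^-1 *: (z i1 i1 * z i2 i2 - z i1 i2 * z i2 i1) = p^-1 *: (D * D')].

Definition is_M_presentation (p q : K) (A : algType K)
  (z : 'I_2 -> 'I_2 -> A) (D D' : A) : Prop :=
  MRel p q z D D' /\
  forall (B : algType K) (zB : 'I_2 -> 'I_2 -> B) (DB D'B : B),
    MRel p q zB DB D'B ->
    (exists f : A -> B, is_alg_hom f /\
        (forall r s, f (z r s) = zB r s) /\ f D = DB /\ f D' = D'B) /\
    (forall f g : A -> B, is_alg_hom f -> is_alg_hom g ->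
        (forall r s, f (z r s) = g (z r s)) -> f D = g D -> f D' = g D' ->
        f =1 g).

Definition MIRel (q : K) (B : algType K) (x : 'I_2 -> 'I_2 -> B) : Prop :=
  [/\ x i1 i1 * x i1 i2 = x i1 i2 * x i1 i1 /\
      x i2 i1 * x i2 i2 = x i2 i2 * x i2 i1,
      (x i1 i1 * x i2 i2 - x i2 i2 * x i1 i1)
        + (x i2 i1 * x i1 i2 - x i1 i2 * x i2 i1) = 0,
      x i1 i1 * x i2 i1 = q ^- 2 *: (x i2 i1 * x i1 i1),
      x i1 i2 * x i2 i2 = q ^- 2 *: (x i2 i2 * x i1 i2) &
      x i2 i1 * x i1 i2 = q ^+ 2 *: (x i1 i2 * x i2 i1)].

Definition MJRel (q : K) (B : algType K) (y : 'I_2 -> 'I_2 -> B) : Prop :=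
  [/\ y i1 i1 * y i2 i1 = y i2 i1 * y i1 i1 /\
      y i1 i2 * y i2 i2 = y i2 i2 * y i1 i2,
      (y i1 i1 * y i2 i2 - y i2 i2 * y i1 i1)
        + (y i1 i2 * y i2 i1 - y i2 i1 * y i1 i2) = 0,
      y i1 i1 * y i1 i2 = q ^- 2 *: (y i1 i2 * y i1 i1),
      y i2 i1 * y i2 i2 = q ^- 2 *: (y i2 i2 * y i2 i1) &
      y i1 i2 * y i2 i1 = q ^+ 2 *: (y i2 i1 * y i1 i2)].

Definition is_presentation4
  (Rel : forall B : algType K, ('I_2 -> 'I_2 -> B) -> Prop)
  (A : algType K) (x : 'I_2 -> 'I_2 -> A) : Prop :=
  Rel A x /\
  forall (B : algType K) (xB : 'I_2 -> 'I_2 -> B), Rel B xB ->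
    (exists f : A -> B, is_alg_hom f /\ (forall r s, f (x r s) = xB r s)) /\
    (forall f g : A -> B, is_alg_hom f -> is_alg_hom g ->
        (forall r s, f (x r s) = g (x r s)) -> f =1 g).

Definition is_localization (A L : algType K) (d : A) (iota : A -> L)
  (dinv : L) : Prop :=
  [/\ is_alg_hom iota, iota d * dinv = 1, dinv * iota d = 1 &
  forall (B : algType K) (f : A -> B) (e : B),
    is_alg_hom f -> f d * e = 1 -> e * f d = 1 ->
    (exists g : L -> B, is_alg_hom g /\ forall a, g (iota a) = f a) /\
    (forall g h : L -> B, is_alg_hom g -> is_alg_hom h ->
        (forall a, g (iota a) = h (iota a)) -> g =1 h)].

(* M_{p,q} is generated in degree one by z_{rs'}, D, D'; the
   localization A[d^{-1}] is generated by the images of these (degree 1)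
   and by d^{-1} (degree -1). *)
Definition loc_gen (A L : algType K) (z : 'I_2 -> 'I_2 -> A) (D D' : A)
  (iota : A -> L) (dinv : L) (i : 'I_7) : L :=
  match val i with
  | 0 => iota (z i1 i1)
  | 1 => iota (z i1 i2)
  | 2 => iota (z i2 i1)
  | 3 => iota (z i2 i2)
  | 4 => iota D
  | 5 => iota D'
  | _ => dinv
  end.

Definition loc_wt (i : 'I_7) : int := if val i == 6 then -1 else 1.

Definition loc_deg0 (A L : algType K) (z : 'I_2 -> 'I_2 -> A) (D D' : A)
  (iota : A -> L) (dinv : L) (u : L) : Prop :=
  exists ws : seq (K * seq 'I_7),
    all (fun t => \sum_(i <- t.2) loc_wt i == 0) ws /\
    u = \sum_(t <- ws) t.1 *: \prod_(i <- t.2) loc_gen z D D' iota dinv i.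

End Defs.

(* The constants c_{rs'}^{1/2} (for D) and c'_{rs'}^{1/2} (for D'),
   where D^{-1} z_{rs'} = c_{rs'} z_{rs'} D^{-1}, so that
   z_{rs'}/D = c_{rs'}^{1/2} z_{rs'} D^{-1}.  From D z = a z D one gets
   c = a^{-1}; with p = q^{+-1} every c is an even power of q and we take
   the square root that is the corresponding power of q:
     p = q    : c = 1,1,q^-2,q^-2 ;  c' = q^2,1,q^2,1
     p = q^-1 : c = q^2,q^2,1,1   ;  c' = 1,q^-2,1,q^-2  (order 11,12,21,22) *)
Definition sqrtcD (p q : Kq) (r s : 'I_2) : Kq :=
  if p == q then (if r == i1 then 1 else q^-1)
  else (if r == i1 then q else 1).

Definition sqrtcD' (p q : Kq) (r s : 'I_2) : Kq :=
  if p == q then (if s == i1 then q else 1)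
  else (if s == i1 then 1 else q^-1).

(* Main.v *)
Require Import Defs.
From HB Require Import structures.
From mathcomp Require Import all_boot all_order all_algebra fraction.
From mathcomp Require Import complex.
From mathcomp Require Import Rstruct.
From mathcomp Require Import boolp.
From mathcomp Require Import ring zify.
Import GRing.Theory.
Local Open Scope ring_scope.
Set Implicit Arguments.
Unset Strict Implicit.
Unset Printing Implicit Defensive.

Record endo (K : fieldType) (V : algType K) := Endo {
  ef :> V -> V;
  ef_lin : forall (a : K) (u v : V), ef (a *: u + v) = a *: ef u + ef v }.
Arguments endo {K} V.

Section EndoLemmas.
Variables (K : fieldType) (V : algType K).
Implicit Types (f g h : endo V).
Lemma endo_ext f g : (forall v, f v = g v) -> f = g.
Proof.
case: f g => f fl [g gl] /= H.
have E : f = g by apply: funext.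
subst g; congr Endo; exact: Prop_irrelevance.
Qed.
Lemma ef0 f : f 0 = 0.
Proof. have H := ef_lin f 1 0 0; rewrite !scale1r addr0 in H.
by apply: (addrI (f 0)); rewrite addr0 -H. Qed.
Lemma efD f u v : f (u + v) = f u + f v.
Proof. by have := ef_lin f 1 u v; rewrite !scale1r. Qed.
Lemma efZ f a u : f (a *: u) = a *: f u.
Proof. by have := ef_lin f a u 0; rewrite !addr0 ef0 addr0. Qed.
Lemma efN f u : f (- u) = - f u.
Proof. by rewrite -scaleN1r efZ scaleN1r. Qed.

Lemma e0_lin (a : K) (u v : V) : (fun _ : V => 0 : V) (a *: u + v) = a *: (fun _ => 0 : V) u + (fun _ => 0 : V) v.
Proof. by rewrite scaler0 addr0. Qed.
Definition e0 : endo V := Endo e0_lin.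
Lemma eadd_lin f g (a : K) (u v : V) : (fun v => f v + g v) (a *: u + v) = a *: (fun v => f v + g v) u + (fun v => f v + g v) v.
Proof. by rewrite /= !ef_lin scalerDr addrACA. Qed.
Definition eadd f g : endo V := Endo (eadd_lin f g).
Lemma eopp_lin f (a : K) (u v : V) : (fun v => - f v) (a *: u + v) = a *: (fun v => - f v) u + (fun v => - f v) v.
Proof. by rewrite /= ef_lin opprD scalerN. Qed.
Definition eopp f : endo V := Endo (eopp_lin f).
Lemma e1_lin (a : K) (u v : V) : id (a *: u + v) = a *: id u + id v.
Proof. by []. Qed.
Definition e1 : endo V := Endo e1_lin.
Lemma emul_lin f g (a : K) (u v : V) : (fun v => f (g v)) (a *: u + v) = a *: (fun v => f (g v)) u + (fun v => f (g v)) v.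
Proof. by rewrite /= !ef_lin. Qed.
Definition emul f g : endo V := Endo (emul_lin f g).
Lemma escale_lin (k : K) f (a : K) (u v : V) : (fun v => k *: f v) (a *: u + v) = a *: (fun v => k *: f v) u + (fun v => k *: f v) v.
Proof. by rewrite /= ef_lin scalerDr !scalerA mulrC. Qed.
Definition escale (k : K) f : endo V := Endo (escale_lin k f).
End EndoLemmas.

HB.instance Definition _ (K : fieldType) (V : algType K) := gen_eqMixin (@endo K V).
HB.instance Definition _ (K : fieldType) (V : algType K) := gen_choiceMixin (@endo K V).

Section EndoZ.
Variables (K : fieldType) (V : algType K).
Lemma eaddA : associative (@eadd K V).
Proof. by move=> f g h; apply: endo_ext => v /=; rewrite addrA. Qed.
Lemma eaddC : commutative (@eadd K V).
Proof. by move=> f g; apply: endo_ext => v /=; rewrite addrC. Qed.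
Lemma eadd0 : left_id (@e0 K V) (@eadd K V).
Proof. by move=> f; apply: endo_ext => v /=; rewrite add0r. Qed.
Lemma eaddN : left_inverse (@e0 K V) (@eopp K V) (@eadd K V).
Proof. by move=> f; apply: endo_ext => v /=; rewrite addNr. Qed.
End EndoZ.

HB.instance Definition _ (K : fieldType) (V : algType K) := GRing.isZmodule.Build (@endo K V)
  (@eaddA K V) (@eaddC K V) (@eadd0 K V) (@eaddN K V).

Section EndoR.
Variables (K : fieldType) (V : algType K).
Lemma emulA : associative (@emul K V).
Proof. by move=> f g h; apply: endo_ext. Qed.
Lemma emul1 : left_id (@e1 K V) (@emul K V).
Proof. by move=> f; apply: endo_ext. Qed.
Lemma emulr1 : right_id (@e1 K V) (@emul K V).
Proof. by move=> f; apply: endo_ext. Qed.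
Lemma emulDl : left_distributive (@emul K V) +%R.
Proof. by move=> f g h; apply: endo_ext. Qed.
Lemma emulDr : right_distributive (@emul K V) +%R.
Proof. by move=> f g h; apply: endo_ext => v /=; rewrite efD. Qed.
Lemma e1_neq0 : (@e1 K V) != 0.
Proof.
apply/eqP => /(congr1 (fun f : endo V => f 1)) /= H.
by move/eqP: H; rewrite oner_eq0.
Qed.
End EndoR.

HB.instance Definition _ (K : fieldType) (V : algType K) := GRing.Zmodule_isNzRing.Build (@endo K V)
  (@emulA K V) (@emul1 K V) (@emulr1 K V) (@emulDl K V) (@emulDr K V) (@e1_neq0 K V).

Section EndoM.
Variables (K : fieldType) (V : algType K).
Lemma escaleA a b (f : endo V) : escale a (escale b f) = escale (a * b) f.
Proof. by apply: endo_ext => v /=; rewrite scalerA. Qed.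
Lemma escale1 : left_id 1 (@escale K V).
Proof. by move=> f; apply: endo_ext => v /=; rewrite scale1r. Qed.
Lemma escaleDr : right_distributive (@escale K V) +%R.
Proof. by move=> a f g; apply: endo_ext => v /=; rewrite scalerDr. Qed.
Lemma escaleDl (f : endo V) : {morph (@escale K V)^~ f : a b / a + b}.
Proof. by move=> a b; apply: endo_ext => v /=; rewrite scalerDl. Qed.
End EndoM.

HB.instance Definition _ (K : fieldType) (V : algType K) := GRing.Zmodule_isLmodule.Build K (@endo K V)
  (@escaleA K V) (@escale1 K V) (@escaleDr K V) (@escaleDl K V).

Section EndoA.
Variables (K : fieldType) (V : algType K).
Lemma escaleAl (a : K) (f g : endo V) : a *: (f * g) = (a *: f) * g.
Proof. by apply: endo_ext. Qed.
Lemma escaleAr (a : K) (f g : endo V) : a *: (f * g) = f * (a *: g).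
Proof. by apply: endo_ext => v /=; rewrite efZ. Qed.
End EndoA.

HB.instance Definition _ (K : fieldType) (V : algType K) := GRing.Lmodule_isLalgebra.Build K (@endo K V) (@escaleAl K V).
HB.instance Definition _ (K : fieldType) (V : algType K) := GRing.Lalgebra_isAlgebra.Build K (@endo K V) (@escaleAr K V).


Record closedP (K : fieldType) (L : algType K) := ClosedP {
  cP : L -> Prop;
  cP1 : cP 1;
  cPD : forall u v, cP u -> cP v -> cP (u + v);
  cPM : forall u v, cP u -> cP v -> cP (u * v);
  cPZ : forall (k : K) u, cP u -> cP (k *: u) }.

Record subP (K : fieldType) (L : algType K) (c : closedP L) := SubP {
  sv :> L; svP : cP c sv }.
Arguments subP {K L} c.

Section SubLemmas.
Variables (K : fieldType) (L : algType K) (c : closedP L).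
Implicit Types (u v w : subP c).
Lemma sub_ext u v : sv u = sv v -> u = v.
Proof. case: u v => u pu [v pv] /= E; subst v; congr SubP; exact: Prop_irrelevance. Qed.
Lemma cP0 : cP c 0.
Proof. by rewrite -(scale0r 1); apply: cPZ; apply: cP1. Qed.
Definition s0 : subP c := SubP cP0.
Definition s1 : subP c := SubP (cP1 c).
Definition sadd u v : subP c := SubP (cPD (svP u) (svP v)).
Definition smul u v : subP c := SubP (cPM (svP u) (svP v)).
Definition sscale (k : K) u : subP c := SubP (cPZ k (svP u)).
Definition sopp u : subP c := sscale (-1) u.
End SubLemmas.

HB.instance Definition _ (K : fieldType) (L : algType K) (c : closedP L) := gen_eqMixin (subP c).
HB.instance Definition _ (K : fieldType) (L : algType K) (c : closedP L) := gen_choiceMixin (subP c).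

Section SubZ.
Variables (K : fieldType) (L : algType K) (c : closedP L).
Lemma saddA : associative (@sadd K L c).
Proof. by move=> u v w; apply: sub_ext; rewrite /= addrA. Qed.
Lemma saddC : commutative (@sadd K L c).
Proof. by move=> u v; apply: sub_ext; rewrite /= addrC. Qed.
Lemma sadd0 : left_id (s0 c) (@sadd K L c).
Proof. by move=> u; apply: sub_ext; rewrite /= add0r. Qed.
Lemma saddN : left_inverse (s0 c) (@sopp K L c) (@sadd K L c).
Proof. by move=> u; apply: sub_ext; rewrite /= scaleN1r addNr. Qed.
End SubZ.

HB.instance Definition _ (K : fieldType) (L : algType K) (c : closedP L) :=
  GRing.isZmodule.Build (subP c) (@saddA K L c) (@saddC K L c) (@sadd0 K L c) (@saddN K L c).

Section SubR.
Variables (K : fieldType) (L : algType K) (c : closedP L).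
Lemma smulA : associative (@smul K L c).
Proof. by move=> u v w; apply: sub_ext; rewrite /= mulrA. Qed.
Lemma smul1 : left_id (s1 c) (@smul K L c).
Proof. by move=> u; apply: sub_ext; rewrite /= mul1r. Qed.
Lemma smulr1 : right_id (s1 c) (@smul K L c).
Proof. by move=> u; apply: sub_ext; rewrite /= mulr1. Qed.
Lemma smulDl : left_distributive (@smul K L c) +%R.
Proof. by move=> u v w; apply: sub_ext; rewrite /= mulrDl. Qed.
Lemma smulDr : right_distributive (@smul K L c) +%R.
Proof. by move=> u v w; apply: sub_ext; rewrite /= mulrDr. Qed.
Lemma s1_neq0 : (s1 c) != 0.
Proof. by apply/eqP => /(congr1 (@sv K L c)) /= /eqP; rewrite oner_eq0. Qed.
End SubR.

HB.instance Definition _ (K : fieldType) (L : algType K) (c : closedP L) :=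
  GRing.Zmodule_isNzRing.Build (subP c)
  (@smulA K L c) (@smul1 K L c) (@smulr1 K L c) (@smulDl K L c) (@smulDr K L c) (@s1_neq0 K L c).

Section SubM.
Variables (K : fieldType) (L : algType K) (c : closedP L).
Lemma sscaleA a b (u : subP c) : sscale a (sscale b u) = sscale (a * b) u.
Proof. by apply: sub_ext; rewrite /= scalerA. Qed.
Lemma sscale1 : left_id 1 (@sscale K L c).
Proof. by move=> u; apply: sub_ext; rewrite /= scale1r. Qed.
Lemma sscaleDr : right_distributive (@sscale K L c) +%R.
Proof. by move=> a u v; apply: sub_ext; rewrite /= scalerDr. Qed.
Lemma sscaleDl (u : subP c) : {morph (@sscale K L c)^~ u : a b / a + b}.
Proof. by move=> a b; apply: sub_ext; rewrite /= scalerDl. Qed.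
End SubM.

HB.instance Definition _ (K : fieldType) (L : algType K) (c : closedP L) :=
  GRing.Zmodule_isLmodule.Build K (subP c)
  (@sscaleA K L c) (@sscale1 K L c) (@sscaleDr K L c) (@sscaleDl K L c).

Section SubA.
Variables (K : fieldType) (L : algType K) (c : closedP L).
Lemma sscaleAl (a : K) (u v : subP c) : a *: (u * v) = (a *: u) * v.
Proof. by apply: sub_ext; rewrite /= scalerAl. Qed.
Lemma sscaleAr (a : K) (u v : subP c) : a *: (u * v) = u * (a *: v).
Proof. by apply: sub_ext; rewrite /= scalerAr. Qed.
End SubA.

HB.instance Definition _ (K : fieldType) (L : algType K) (c : closedP L) :=
  GRing.Lmodule_isLalgebra.Build K (subP c) (@sscaleAl K L c).
HB.instance Definition _ (K : fieldType) (L : algType K) (c : closedP L) :=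
  GRing.Lalgebra_isAlgebra.Build K (subP c) (@sscaleAr K L c).

Section SubHom.
Variables (K : fieldType) (L : algType K) (c : closedP L).
Lemma sv_hom : is_alg_hom (@sv K L c).
Proof. by split. Qed.
End SubHom.

Lemma I2_cases (r : 'I_2) : r = i1 \/ r = i2.
Proof. by case: r => [[|[|n]] H]; [left|right|]; try apply: val_inj. Qed.

Section Hom.
Variables (K : fieldType) (A B : algType K) (f : A -> B).
Hypothesis Hf : is_alg_hom f.
Lemma homD x y : f (x + y) = f x + f y. Proof. by case: Hf. Qed.
Lemma homM x y : f (x * y) = f x * f y. Proof. by case: Hf. Qed.
Lemma hom1 : f 1 = 1. Proof. by case: Hf. Qed.
Lemma homZ k x : f (k *: x) = k *: f x. Proof. by case: Hf. Qed.
Lemma hom0 : f 0 = 0. Proof. by rewrite -(scale0r 0) homZ scale0r. Qed.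
Lemma homN x : f (- x) = - f x. Proof. by rewrite -scaleN1r homZ scaleN1r. Qed.
Lemma homB x y : f (x - y) = f x - f y. Proof. by rewrite homD homN. Qed.
End Hom.

Lemma id_hom (K : fieldType) (A : algType K) : is_alg_hom (@id A).
Proof. by []. Qed.
Lemma comp_hom (K : fieldType) (A B C : algType K) (f : A -> B) (g : B -> C) :
  is_alg_hom f -> is_alg_hom g -> is_alg_hom (g \o f).
Proof.
move=> Hf Hg; split=> [x y|x y||k x] /=.
- by rewrite !(homD Hf, homD Hg).
- by rewrite !(homM Hf, homM Hg).
- by rewrite !(hom1 Hf, hom1 Hg).
- by rewrite !(homZ Hf, homZ Hg).
Qed.

Lemma MRel_hom (K : fieldType) (A B : algType K) (h : A -> B) p q z D D' :
  is_alg_hom h -> MRel p q z D D' ->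
  MRel p q (fun r s => h (z r s)) (h D) (h D').
Proof.
move=> Hh [[c1 c2 c3 c4 c5] det [d1 d2 d3 d4] [e1 e2 e3 e4] [f1 f2]].
have HM := homM Hh; have HB := homB Hh; have HZ := homZ Hh.
split; [split|idtac|split|split|split];
  rewrite -?HM -?HB -?HZ; congr h; assumption.
Qed.

Lemma MIRel_reflect (K : fieldType) (A B : algType K) (h : A -> B) q x :
  is_alg_hom h -> injective h -> MIRel q (fun r s => h (x r s)) -> MIRel q x.
Proof.
move=> Hh hi [[c1 c2] c3 c4 c5 c6].
have HM := homM Hh; have HB := homB Hh; have HZ := homZ Hh; have HD := homD Hh.
split; [split|..]; apply: hi; rewrite ?(HM, HB, HZ, HD, hom0 Hh) //.
Qed.

Lemma scaleMM (K : fieldType) (A : algType K) (a b : K) (u v : A) :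
  (a *: u) * (b *: v) = (a * b) *: (u * v).
Proof. by rewrite -scalerAl -scalerAr scalerA. Qed.

Lemma MIRel_scale (K : fieldType) (A : algType K) q (x : 'I_2 -> 'I_2 -> A) (c : 'I_2 -> K) :
  MIRel q x -> MIRel q (fun r s => c r *: x r s).
Proof.
move=> [[c1 c2] c3 c4 c5 c6].
split; [split|..]; rewrite ?scaleMM ?(mulrC (c i2) (c i1)).
- by rewrite c1.
- by rewrite c2.
- by rewrite -!scalerBr -scalerDr c3 scaler0.
- by rewrite c4 !scalerA; congr (_ *: _); exact: mulrC.
- by rewrite c5 !scalerA; congr (_ *: _); exact: mulrC.
- by rewrite c6 !scalerA; congr (_ *: _); exact: mulrC.
Qed.

Lemma inv_comm (K : fieldType) (L : algType K) (E Di g : L) (al : K) :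
  E * Di = 1 -> Di * E = 1 -> al != 0 -> E * g = al *: (g * E) ->
  Di * g = al^-1 *: (g * Di).
Proof.
move=> hED hDE hal hg.
have gE : g * E = al^-1 *: (E * g) by rewrite hg scalerA mulVf // scale1r.
rewrite -[Di * g]mulr1 -hED mulrA -(mulrA Di) gE -scalerAr -scalerAl mulrA hDE mul1r.
by rewrite scalerAl.
Qed.

Definition arow (K : fieldType) (p q : K) (r : 'I_2) : K :=
  if r == i1 then p / q else p * q.

Lemma arow1 (K : fieldType) (p q : K) : arow p q i1 = p / q.
Proof. by rewrite /arow eqxx. Qed.
Lemma arow2 (K : fieldType) (p q : K) : arow p q i2 = p * q.
Proof. by []. Qed.

Lemma arow_neq0 (K : fieldType) (p q : K) r : p != 0 -> q != 0 -> arow p q r != 0.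
Proof.
move=> hp hq; case: (I2_cases r) => ->; rewrite ?arow1 ?arow2 mulf_neq0 ?invr_eq0 //.
Qed.


Lemma rearr4 (V : zmodType) (a b c d : V) : a - b + (c - d) = (a - d) - (b - c).
Proof. by rewrite opprB [LHS]addrACA [RHS]addrACA (addrC (-b)). Qed.

Lemma shape2 (K : fieldType) (L : algType K) (U V W M : L) (k1 k2 c1 c2 : K) :
  k1 *: (U - W) = k2 *: (V - W) -> k2 != 0 -> c1 * k2 = c2 * k1 ->
  c1 *: (U * M) - c2 *: (V * M) + (c2 *: (W * M) - c1 *: (W * M)) = 0.
Proof.
move=> H hk hc.
have HV : V - W = (k2^-1 * k1) *: (U - W).
  by rewrite -scalerA H scalerA mulVf // scale1r.
have hc' : c2 * (k2^-1 * k1) = c1 by rewrite mulrCA -hc mulrCA mulVf // mulr1.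
by rewrite rearr4 -!scalerBr -!mulrBl HV -scalerAl scalerA hc' subrr.
Qed.

Section LCalc.
Variables (K : fieldType) (p q : K) (hp : p != 0) (hq : q != 0).
Variables (L : algType K) (Z : 'I_2 -> 'I_2 -> L) (E E' Di : L).
Hypothesis HM : MRel p q Z E E'.
Hypothesis hED : E * Di = 1.
Hypothesis hDE : Di * E = 1.
Variable sr : 'I_2 -> K.

Local Notation a := (arow p q).

Lemma DZ r s : E * Z r s = a r *: (Z r s * E).
Proof.
case: HM => _ _ [d1 d2 d3 d4] _ _.
by case: (I2_cases r) => ->; case: (I2_cases s) => ->; rewrite ?arow1 ?arow2.
Qed.

Lemma DiZ r s : Di * Z r s = (a r)^-1 *: (Z r s * Di).
Proof. exact: (inv_comm hED hDE (arow_neq0 r hp hq) (DZ r s)). Qed.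

Lemma YY r s r' s' : (Z r s * Di) * (Z r' s' * Di) =
  (a r')^-1 *: (Z r s * Z r' s' * (Di * Di)).
Proof.
by rewrite mulrA -(mulrA (Z r s)) DiZ -scalerAr -scalerAl !mulrA.
Qed.

Definition XL r s := sr r *: (Z r s * Di).

Lemma XX r s r' s' : XL r s * XL r' s' =
  (sr r * sr r' * (a r')^-1) *: (Z r s * Z r' s' * (Di * Di)).
Proof. by rewrite /XL scaleMM YY scalerA. Qed.

Lemma XL_MIRel : MIRel q XL.
Proof.
case: HM => [[c1 c2 c3 c4 c5] det _ _ _].
have a1 : a i1 = p / q by rewrite arow1.
have a2 : a i2 = p * q by rewrite arow2.
split; [split|..]; rewrite ?XX.
- by rewrite c1.
- by rewrite c4.
- rewrite c5 in det; rewrite c5. apply: (shape2 (Di * Di) det hq).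
  rewrite a1 a2; field; by rewrite hp hq.
- rewrite c2 scalerA; congr (_ *: _); rewrite a1 a2; field; by rewrite hp hq.
- rewrite c3 scalerA; congr (_ *: _); rewrite a1 a2; field; by rewrite hp hq.
- rewrite -c5 scalerA; congr (_ *: _); rewrite a1 a2; field; by rewrite hp hq.
Qed.

End LCalc.

Inductive lx (K : Type) := LP | LW | LU | LT | L0 | LAdd of lx K & lx K | LOpp of lx K | LSc of K & lx K.

Section Lin4.
Variables (K : fieldType) (V : lmodType K) (P W U T : V).
Fixpoint lev (e : lx K) : V :=
  match e with
  | LP => P | LW => W | LU => U | LT => T | L0 => 0
  | LAdd a b => lev a + lev b
  | LOpp a => - lev a
  | LSc k a => k *: lev a
  end.
Fixpoint lco (e : lx K) : K * K * K * K :=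
  match e with
  | LP => (1, 0, 0, 0) | LW => (0, 1, 0, 0) | LU => (0, 0, 1, 0) | LT => (0, 0, 0, 1)
  | L0 => (0, 0, 0, 0)
  | LAdd a b => ((lco a).1.1.1 + (lco b).1.1.1, (lco a).1.1.2 + (lco b).1.1.2,
                 (lco a).1.2 + (lco b).1.2, (lco a).2 + (lco b).2)
  | LOpp a => (- (lco a).1.1.1, - (lco a).1.1.2, - (lco a).1.2, - (lco a).2)
  | LSc k a => (k * (lco a).1.1.1, k * (lco a).1.1.2, k * (lco a).1.2, k * (lco a).2)
  end.
Lemma levE e : lev e = (lco e).1.1.1 *: P + (lco e).1.1.2 *: W + (lco e).1.2 *: U + (lco e).2 *: T.
Proof.
elim: e => [||||| a IHa b IHb | a IHa | k a IHa] /=.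
- by rewrite scale1r !scale0r !addr0.
- by rewrite scale1r !scale0r add0r !addr0.
- by rewrite scale1r !scale0r !add0r addr0.
- by rewrite scale1r !scale0r !add0r.
- by rewrite !scale0r !addr0.
- rewrite IHa IHb !scalerDl [LHS]addrACA; congr (_ + _).
  rewrite [LHS]addrACA; congr (_ + _).
  by rewrite [LHS]addrACA.
- by rewrite IHa !opprD !scaleNr.
- by rewrite IHa !scalerDr !scalerA.
Qed.
Lemma lin4_ok e1 e2 : (lco e1).1.1.1 = (lco e2).1.1.1 -> (lco e1).1.1.2 = (lco e2).1.1.2 ->
  (lco e1).1.2 = (lco e2).1.2 -> (lco e1).2 = (lco e2).2 -> lev e1 = lev e2.
Proof. by rewrite !levE => -> -> -> ->. Qed.
End Lin4.

Ltac reify4 K P W U T t :=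
  lazymatch t with
  | P => constr:(@LP K)
  | W => constr:(@LW K)
  | U => constr:(@LU K)
  | T => constr:(@LT K)
  | ?a + ?b => let x := reify4 K P W U T a in let y := reify4 K P W U T b in constr:(@LAdd K x y)
  | - ?a => let x := reify4 K P W U T a in constr:(@LOpp K x)
  | ?k *: ?a => let x := reify4 K P W U T a in constr:(@LSc K k x)
  | 0 => constr:(@L0 K)
  end.

Ltac lin4 K P W U T :=
  let P0 := fresh "P0" in let W0 := fresh "W0" in
  let U0 := fresh "U0" in let T0 := fresh "T0" in
  (try set P0 := P); (try set W0 := W); (try set U0 := U); (try set T0 := T);
  lazymatch goal with |- ?X = ?Y =>
    let e1 := reify4 K P0 W0 U0 T0 X in let e2 := reify4 K P0 W0 U0 T0 Y in
    change (lev P0 W0 U0 T0 e1 = lev P0 W0 U0 T0 e2); apply: lin4_ok; rewrite /=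
  end.


Lemma scalerAl' (K : fieldType) (A : algType K) (k : K) (u v : A) : (k *: u) * v = k *: (u * v).
Proof. by rewrite scalerAl. Qed.
Lemma scalerAr' (K : fieldType) (A : algType K) (k : K) (u v : A) : u * (k *: v) = k *: (u * v).
Proof. by rewrite scalerAr. Qed.

Ltac snorm := rewrite ?(scalerAl', scalerAr', scalerA, mulrA, mulrDl, mulrDr, mulrBl, mulrBr).

Section AIrel.
Variables (K : fieldType) (q : K) (hq : q != 0).
Variables (AI : algType K) (x : 'I_2 -> 'I_2 -> AI).
Hypothesis HR : MIRel q x.

Definition Dl := x i1 i1 * x i2 i2 - x i1 i2 * x i2 i1.

Lemma h2211 : x i2 i2 * x i1 i1 = x i1 i1 * x i2 i2 + (q ^+ 2 - 1) *: (x i1 i2 * x i2 i1).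
Proof.
case: HR => [_ m3 _ _ m6].
move/eqP: m3; rewrite m6 addr_eq0 => /eqP m3.
have -> : x i2 i2 * x i1 i1 = x i1 i1 * x i2 i2 - (x i1 i1 * x i2 i2 - x i2 i2 * x i1 i1).
  by rewrite opprB addrC subrK.
by rewrite m3 opprK scalerBl scale1r.
Qed.

Lemma Dl11 : Dl * x i1 i1 = x i1 i1 * Dl.
Proof.
case: HR => [[m1 m2] m3 m4 m5 m6].
have h2111 : x i2 i1 * x i1 i1 = q ^+ 2 *: (x i1 i1 * x i2 i1).
  by rewrite m4 scalerA mulfV ?scale1r // expf_neq0.
rewrite /Dl mulrBl mulrBr -!mulrA h2211 h2111 mulrDr !scalerAr' (mulrA (x i1 i2)) -m1 -mulrA.
lin4 K (x i1 i1 * (x i1 i1 * x i2 i2)) (x i1 i1 * (x i1 i2 * x i2 i1)) (0 : AI) (0 : AI); ring.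
Qed.

Lemma Dl22 : Dl * x i2 i2 = x i2 i2 * Dl.
Proof.
case: HR => [[m1 m2] m3 m4 m5 m6].
rewrite /Dl mulrBl mulrBr -!mulrA m2 (mulrA (x i1 i2)) m5 scalerAl' -mulrA.
rewrite (mulrA (x i2 i2) (x i1 i1)) h2211 mulrDl scalerAl' -!mulrA m2.
rewrite (mulrA (x i1 i2) (x i2 i2)) m5 scalerAl' -mulrA.
lin4 K (x i1 i1 * (x i2 i2 * x i2 i2)) (x i2 i2 * (x i1 i2 * x i2 i1)) (0 : AI) (0 : AI).
- by ring.
- by field.
- by ring.
- by ring.
Qed.

Lemma Dl12 : Dl * x i1 i2 = q ^+ 2 *: (x i1 i2 * Dl).
Proof.
case: HR => [[m1 m2] m3 m4 m5 m6].
have h2212 : x i2 i2 * x i1 i2 = q ^+ 2 *: (x i1 i2 * x i2 i2).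
  by rewrite m5 scalerA mulfV ?scale1r // expf_neq0.
rewrite /Dl mulrBl mulrBr -!mulrA h2212 m6 !scalerAr' mulrA m1 -mulrA.
lin4 K (x i1 i2 * (x i1 i1 * x i2 i2)) (x i1 i2 * (x i1 i2 * x i2 i1)) (0 : AI) (0 : AI); ring.
Qed.

Lemma Dl21 : Dl * x i2 i1 = q ^- 2 *: (x i2 i1 * Dl).
Proof.
case: HR => [[m1 m2] m3 m4 m5 m6].
have h1221 : x i1 i2 * x i2 i1 = q ^- 2 *: (x i2 i1 * x i1 i2).
  by rewrite m6 scalerA mulVf ?scale1r // expf_neq0.
rewrite /Dl mulrBl mulrBr -!mulrA -m2 (mulrA (x i1 i1) (x i2 i1)) m4 scalerAl' -mulrA.
rewrite (mulrA (x i1 i2) (x i2 i1)) [in LHS]h1221 scalerAl' -mulrA.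
lin4 K (x i2 i1 * (x i1 i1 * x i2 i2)) (x i2 i1 * (x i1 i2 * x i2 i1)) (0 : AI) (0 : AI); ring.
Qed.

End AIrel.

Section Model.
Variables (K : fieldType) (p q : K) (hp : p != 0) (hq : q != 0) (sr : 'I_2 -> K).
Hypothesis hs : forall r, sr r != 0.
Variables (AI : algType K) (x : 'I_2 -> 'I_2 -> AI).
Hypothesis HR : MIRel q x.
Variable sig : AI -> AI.
Hypothesis Hsig : is_alg_hom sig.
Hypothesis sigx : forall r s, sig (x r s) = arow p q r *: x r s.

Lemma hom_lin (f : AI -> AI) : is_alg_hom f -> forall (k : K) (u v : AI), f (k *: u + v) = k *: f u + f v.
Proof. by move=> Hf k u v; rewrite (homD Hf) (homZ Hf). Qed.
Lemma Lm_lin (c : AI) (k : K) (u v : AI) : (fun v => c * v) (k *: u + v) = k *: (fun v => c * v) u + (fun v => c * v) v.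
Proof. by rewrite /= mulrDr scalerAr. Qed.
Definition Lm (c : AI) : endo AI := Endo (Lm_lin c).
Definition Tm : endo AI := Endo (hom_lin Hsig).

Lemma emulE (f g : endo AI) v : (f * g) v = f (g v). Proof. by []. Qed.
Lemma escaleE k (f : endo AI) v : (k *: f) v = k *: f v. Proof. by []. Qed.
Lemma eaddE (f g : endo AI) v : (f + g) v = f v + g v. Proof. by []. Qed.
Lemma eoppE (f : endo AI) v : (- f) v = - f v. Proof. by []. Qed.
Lemma LmE c v : Lm c v = c * v. Proof. by []. Qed.
Lemma TmE v : Tm v = sig v. Proof. by []. Qed.

Lemma sigDl : sig (Dl x) = (arow p q i1 * arow p q i2) *: Dl x.
Proof. by rewrite /Dl (homB Hsig) !(homM Hsig) !sigx !scaleMM -scalerBr. Qed.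

Definition zB r s : endo AI := (sr r)^-1 *: (Lm (x r s) * Tm).
Definition D'B : endo AI := ((sr i1)^-1 * (sr i2)^-1) *: (Lm (Dl x) * Tm).

Ltac enorm := apply: endo_ext => v; rewrite /zB /D'B;
  rewrite ?(emulE, escaleE, eaddE, eoppE, LmE, TmE);
  rewrite ?(homZ Hsig, homM Hsig, homB Hsig, homD Hsig, sigx, sigDl);
  rewrite ?(scalerAl', scalerAr', scalerA, mulrA).

Lemma model_MRel : MRel p q zB Tm D'B.
Proof.
case: HR => [[m1 m2] m3 m4 m5 m6].
have a1 : arow p q i1 = p / q by rewrite arow1.
have a2 : arow p q i2 = p * q by rewrite arow2.
split; [split|idtac|split|split|split]; enorm.
all: rewrite ?a1 ?a2.
- by rewrite m1.
- rewrite m4 ?(scalerAl', scalerAr', scalerA, mulrA); congr (_ *: _); field.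
  by rewrite ?hp ?hq ?hs.
- rewrite m5 ?(scalerAl', scalerAr', scalerA, mulrA); congr (_ *: _); field.
  by rewrite ?hp ?hq ?hs.
- by rewrite m2.
- rewrite m6 ?(scalerAl', scalerAr', scalerA, mulrA); congr (_ *: _); field.
  by rewrite ?hp ?hq ?hs.
- rewrite (h2211 HR) mulrDl ?(scalerAl', scalerAr', scalerA, mulrA).
  lin4 K (x i1 i1 * x i2 i2 * sig (sig v)) (x i1 i2 * x i2 i1 * sig (sig v)) (0 : AI) (0 : AI).
  + field; by rewrite ?hp ?hq ?hs.
  + field; by rewrite ?hp ?hq ?hs.
  + by ring.
  + by ring.
- congr (_ *: _); field; by rewrite ?hp ?hq ?hs.
- congr (_ *: _); field; by rewrite ?hp ?hq ?hs.
- congr (_ *: _); field; by rewrite ?hp ?hq ?hs.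
- congr (_ *: _); field; by rewrite ?hp ?hq ?hs.
- rewrite (Dl11 hq HR) ?(scalerAl', scalerAr', scalerA, mulrA); congr (_ *: _); field.
  by rewrite ?hp ?hq ?hs.
- rewrite (Dl12 hq HR) ?(scalerAl', scalerAr', scalerA, mulrA); congr (_ *: _); field.
  by rewrite ?hp ?hq ?hs.
- rewrite (Dl21 hq HR) ?(scalerAl', scalerAr', scalerA, mulrA); congr (_ *: _); field.
  by rewrite ?hp ?hq ?hs.
- rewrite (Dl22 hq HR) ?(scalerAl', scalerAr', scalerA, mulrA); congr (_ *: _); field.
  by rewrite ?hp ?hq ?hs.
- congr (_ *: _); field; by rewrite ?hp ?hq ?hs.
- rewrite /Dl mulrBl ?(scalerAl', scalerAr', scalerA, mulrA).
  lin4 K (x i1 i1 * x i2 i2 * sig (sig v)) (x i1 i2 * x i2 i1 * sig (sig v)) (0 : AI) (0 : AI).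
  + field; by rewrite ?hp ?hq ?hs.
  + field; by rewrite ?hp ?hq ?hs.
  + by ring.
  + by ring.
Qed.
End Model.

Lemma Lm_hom (K : fieldType) (AI : algType K) : is_alg_hom (@Lm K AI).
Proof.
split=> [u v|u v||k u]; apply: endo_ext => w.
- by rewrite eaddE !LmE mulrDl.
- by rewrite emulE !LmE mulrA.
- by rewrite LmE mul1r.
- by rewrite escaleE !LmE scalerAl.
Qed.

Lemma inj_model (K : fieldType) (p q : K) (hp : p != 0) (hq : q != 0)
  (sr : 'I_2 -> K) (hs : forall r, sr r != 0)
  (AI : algType K) (x : 'I_2 -> 'I_2 -> AI) (HI : is_presentation4 (@MIRel K q) x) :
  exists (B : algType K) (zB : 'I_2 -> 'I_2 -> B) (DB D'B T' : B) (Lh : AI -> B),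
  [/\ MRel p q zB DB D'B, DB * T' = 1, T' * DB = 1, is_alg_hom Lh /\ injective Lh &
      forall r s, Lh (x r s) = sr r *: (zB r s * T')].
Proof.
case: HI => HR HU.
have [[sig [Hsig sigx]] _] := HU AI _ (MIRel_scale (arow p q) HR).
have [[sig' [Hsig' sigx']] _] := HU AI _ (MIRel_scale (fun r => (arow p q r)^-1) HR).
have [_ uniq] := HU AI x HR.
have ss' : forall v, sig (sig' v) = v.
  move=> v; apply: (uniq (sig \o sig') id (comp_hom Hsig' Hsig) (@id_hom _ _)) => r s /=.
  by rewrite sigx' (homZ Hsig) sigx scalerA mulVf ?scale1r // arow_neq0.
have s's : forall v, sig' (sig v) = v.
  move=> v; apply: (uniq (sig' \o sig) id (comp_hom Hsig Hsig') (@id_hom _ _)) => r s /=.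
  by rewrite sigx (homZ Hsig') sigx' scalerA mulfV ?scale1r // arow_neq0.
exists (endo AI), (zB sr x Hsig), (Tm Hsig), (D'B sr x Hsig), (Tm Hsig'), (@Lm K AI).
split.
- exact: model_MRel.
- by apply: endo_ext => v; rewrite emulE !TmE ss'.
- by apply: endo_ext => v; rewrite emulE !TmE s's.
- split; first exact: Lm_hom.
  move=> u v /(congr1 (fun F : endo AI => F 1)).
  by rewrite !LmE !mulr1.
- move=> r s; apply: endo_ext => v.
  by rewrite /zB escaleE emulE escaleE emulE !TmE ss' LmE scalerA mulfV ?scale1r.
Qed.

Section Epow.
Variables (K : fieldType) (L : algType K) (E Di : L).
Hypothesis hED : E * Di = 1.
Hypothesis hDE : Di * E = 1.

Definition Epow (n : int) : L := match n with Posz k => E ^+ k | Negz k => Di ^+ k.+1 end.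

Lemma EpowS n : E * Epow n = Epow (n + 1).
Proof.
case: n => k.
- have -> : (Posz k + 1 = Posz k.+1)%R by rewrite -[in RHS]addn1 PoszD.
  by rewrite /= exprS.
- case: k => [|k].
  + by rewrite /= expr1 hED.
  + have -> : (Negz k.+1 + 1 = Negz k)%R by rewrite !NegzE; lia.
    by rewrite /= exprS mulrA hED mul1r.
Qed.

Lemma Epow_Di n : Epow n * Di = Epow (n - 1).
Proof.
case: n => k.
- case: k => [|k].
  + by rewrite /= mul1r expr1.
  + have -> : (Posz k.+1 - 1 = Posz k)%R by lia.
    by rewrite /= exprSr -mulrA hED mulr1.
- have -> : (Negz k - 1 = Negz k.+1)%R by rewrite !NegzE; lia.
  by rewrite /= [in RHS]exprSr.
Qed.

Lemma pow_comm (X g : L) (c : K) : X * g = c *: (g * X) ->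
  forall k, X ^+ k * g = c ^+ k *: (g * X ^+ k).
Proof.
move=> H; elim=> [|k IH]; first by rewrite !expr0 mul1r mulr1 scale1r.
rewrite exprS -mulrA IH scalerAr' mulrA H scalerAl' -mulrA -exprS scalerA exprSr.
by rewrite -exprSr.
Qed.

Lemma Epow_comm (g : L) (al : K) : al != 0 -> E * g = al *: (g * E) ->
  forall n, exists b : K, Epow n * g = b *: (g * Epow n).
Proof.
move=> hal H; case=> k /=.
- by exists (al ^+ k); apply: pow_comm.
- have H' := inv_comm hED hDE hal H.
  by exists (al^-1 ^+ k.+1); apply: pow_comm.
Qed.

Variable Im : L -> Prop.
Hypothesis hIm1 : Im 1.
Hypothesis hImM : forall u v, Im u -> Im v -> Im (u * v).
Hypothesis hImZ : forall (k : K) u, Im u -> Im (k *: u).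
Hypothesis hImD : forall u v, Im u -> Im v -> Im (u + v).
Variable G : 'I_7 -> L.
Hypothesis hGen : forall i : 'I_7, (G i = Di /\ loc_wt i = -1) \/
  (loc_wt i = 1 /\ (exists al, al != 0 /\ E * G i = al *: (G i * E)) /\ Im (G i * Di)).

Lemma word_rep (w : seq 'I_7) : exists u, Im u /\
  \prod_(i <- w) G i = u * Epow (\sum_(i <- w) loc_wt i).
Proof.
elim/last_ind: w => [|w i [u [Hu IH]]].
  by exists 1; rewrite !big_nil mul1r.
rewrite -cats1 !big_cat !big_seq1 /= IH.
case: (hGen i) => [[-> ->]|[-> [[al [hal Hal]] HGi]]].
  by exists u; split => //; rewrite -mulrA Epow_Di.
have [b Hb] := Epow_comm hal Hal (\sum_(j <- w) loc_wt j).
exists (b *: (u * (G i * Di))); split; first by apply: hImZ; apply: hImM.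
rewrite -mulrA Hb -EpowS scalerAr' scalerAl' -!mulrA; congr (_ *: (u * _)).
by rewrite (mulrA Di) hDE mul1r.
Qed.

Hypothesis hIm0 : Im 0.

Definition gdeg0 (u : L) := exists ws : seq (K * seq 'I_7),
  all (fun t => \sum_(i <- t.2) loc_wt i == 0) ws /\
  u = \sum_(t <- ws) t.1 *: \prod_(i <- t.2) G i.

Lemma deg0_Im u : gdeg0 u -> Im u.
Proof.
case=> ws [Hall ->]; elim: ws Hall => [|t ws IH] /=; first by rewrite big_nil.
case/andP=> /eqP Ht Hws; rewrite big_cons; apply: hImD; last exact: IH.
apply: hImZ; have [u0 [Hu0 ->]] := word_rep t.2.
by rewrite Ht /= mulr1.
Qed.

End Epow.

Section Deg0Closed.
Variables (K : fieldType) (L : algType K) (G : 'I_7 -> L).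

Lemma gdeg0_1 : gdeg0 G 1.
Proof.
exists [:: (1, [::])]; split; first by rewrite /= big_nil.
by rewrite big_seq1 big_nil scale1r.
Qed.

Lemma gdeg0_D u v : gdeg0 G u -> gdeg0 G v -> gdeg0 G (u + v).
Proof.
case=> w1 [h1 ->] [w2 [h2 ->]]; exists (w1 ++ w2).
by rewrite all_cat h1 h2 big_cat.
Qed.

Lemma gdeg0_Z (k : K) u : gdeg0 G u -> gdeg0 G (k *: u).
Proof.
case=> w [h ->]; exists [seq (k * t.1, t.2) | t <- w]; split.
  by rewrite all_map; exact: h.
rewrite big_map scaler_sumr; apply: eq_bigr => t _ /=.
by rewrite scalerA.
Qed.

Lemma gdeg0_M u v : gdeg0 G u -> gdeg0 G v -> gdeg0 G (u * v).
Proof.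
case=> w1 [h1 ->] [w2 [h2 ->]].
exists [seq (t.1 * t'.1, t.2 ++ t'.2) | t <- w1, t' <- w2]; split.
  apply/all_allpairsP => t t' Ht Ht' /=.
  by rewrite big_cat /= (eqP (allP h1 t Ht)) (eqP (allP h2 t' Ht')) addr0.
rewrite big_allpairs_dep mulr_suml; apply: eq_bigr => t _.
rewrite mulr_sumr; apply: eq_bigr => t' _ /=.
by rewrite scaleMM big_cat.
Qed.

Definition deg0C : closedP L := ClosedP gdeg0_1 gdeg0_D gdeg0_M gdeg0_Z.
End Deg0Closed.

Lemma MIRel_hom (K : fieldType) (A B : algType K) (h : A -> B) q x :
  is_alg_hom h -> MIRel q x -> MIRel q (fun r s => h (x r s)).
Proof.
move=> Hh [[m1 m2] m3 m4 m5 m6].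
split; [split|..]; rewrite -?(homM Hh) -?(homB Hh) -?(homD Hh) -?(homZ Hh).
- by rewrite m1.
- by rewrite m2.
- by rewrite m3 (hom0 Hh).
- by rewrite m4.
- by rewrite m5.
- by rewrite m6.
Qed.

Lemma core_main (K : fieldType) (p q : K) (hp : p != 0) (hq : q != 0)
  (sr : 'I_2 -> K) (hs : forall r, sr r != 0)
  (A : algType K) (z : 'I_2 -> 'I_2 -> A) (D D' : A)
  (HA : is_M_presentation p q z D D')
  (AI : algType K) (x : 'I_2 -> 'I_2 -> AI) (HI : is_presentation4 (@MIRel K q) x)
  (L : algType K) (iota : A -> L) (Dinv : L) (HL : is_localization D iota Dinv) :
  exists f : AI -> L, [/\ is_alg_hom f, injective f,
     (forall r s, f (x r s) = sr r *: (iota (z r s) * Dinv)) &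
     (forall u, gdeg0 (loc_gen z D D' iota Dinv) u <-> exists v, u = f v)].
Proof.
case: (HA) => HM HAU; case: (HL) => Hio hED hDE HLU; case: (HI) => HR HIU.
have HML : MRel p q (fun r s => iota (z r s)) (iota D) (iota D') := MRel_hom Hio HM.
have HXL := XL_MIRel hp hq HML hED hDE sr.
have [[f [Hf fx]] funiq] := HIU L _ HXL.
have fx' : forall r s, f (x r s) = sr r *: (iota (z r s) * Dinv) by move=> r s; rewrite fx.
have DiZ' : forall r s, Dinv * iota (z r s) = (arow p q r)^-1 *: (iota (z r s) * Dinv)
  := DiZ hp hq HML hED hDE.
have DZ' : forall r s, iota D * iota (z r s) = arow p q r *: (iota (z r s) * iota D)
  := DZ HML.
exists f; split => //.
- have [B [zB [DB [D'B [T' [Lh [HMB hDT hTD [HLh Linj] Lx]]]]]]] := inj_model hp hq hs HI.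
  have [[fA [HfA [fAz [fAD fAD']]]] _] := HAU B zB DB D'B HMB.
  have fDT : fA D * T' = 1 by rewrite fAD.
  have fTD : T' * fA D = 1 by rewrite fAD.
  have [[g [Hg gio]] _] := HLU B fA T' HfA fDT fTD.
  have gD : g Dinv = T'.
    by rewrite -[g Dinv]mulr1 -hDT -fAD -gio mulrA -(homM Hg) hDE (hom1 Hg) mul1r.
  have [_ uB] := HIU B _ (MIRel_hom HLh HR).
  have gf : forall v, g (f v) = Lh v.
    apply: (uB (g \o f) Lh (comp_hom Hf Hg) HLh) => r s /=.
    by rewrite fx' (homZ Hg) (homM Hg) gio gD fAz Lx.
  by move=> u v /(congr1 g); rewrite !gf; apply: Linj.
have ImY : forall r s, exists v, iota (z r s) * Dinv = f v.
  move=> r s; exists ((sr r)^-1 *: x r s).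
  by rewrite (homZ Hf) fx' scalerA mulVf // scale1r.
move=> u; split.
- apply: (deg0_Im hED hDE (Im := fun u => exists v, u = f v)).
  + by exists 1; rewrite (hom1 Hf).
  + by move=> _ _ [a ->] [b ->]; exists (a * b); rewrite (homM Hf).
  + by move=> k _ [a ->]; exists (k *: a); rewrite (homZ Hf).
  + by move=> _ _ [a ->] [b ->]; exists (a + b); rewrite (homD Hf).
  + case=> [[|[|[|[|[|[|[|n]]]]]]] Hi].
    * right; split => //; split; last exact: ImY.
      by exists (arow p q i1); split; [exact: arow_neq0 | exact: DZ'].
    * right; split => //; split; last exact: ImY.
      by exists (arow p q i1); split; [exact: arow_neq0 | exact: DZ'].
    * right; split => //; split; last exact: ImY.
      by exists (arow p q i2); split; [exact: arow_neq0 | exact: DZ'].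
    * right; split => //; split; last exact: ImY.
      by exists (arow p q i2); split; [exact: arow_neq0 | exact: DZ'].
    * right; split => //; split.
        by exists 1; rewrite oner_eq0 scale1r.
      by exists 1; rewrite hED (hom1 Hf).
    * right; split => //; split.
        exists (p * p); split; first by rewrite mulf_neq0.
        case: HML => _ _ _ _ [f1 _] /=.
        by rewrite -[LHS]scale1r -(mulfV hp) -scalerA f1 scalerA.
      rewrite /=.
      case: HML => _ _ _ _ [_ f2].
      have EE : iota D * iota D' = (p / q) *:
          (iota (z i1 i1) * iota (z i2 i2) - iota (z i1 i2) * iota (z i2 i1)).
        by rewrite -[LHS]scale1r -(mulfV hp) -(scalerA p p^-1) -f2 scalerA.
      have -> : iota D' * Dinv = Dinv * (iota D * iota D') * Dinv.
        by rewrite (mulrA Dinv) hDE mul1r.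
      rewrite EE -scalerAr -scalerAl mulrBr mulrBl !mulrA !DiZ' -!scalerAl.
      rewrite -(mulrA (iota (z i1 i1) * Dinv)) -(mulrA (iota (z i1 i2) * Dinv)).
      have [y11 ->] := ImY i1 i1; have [y22 ->] := ImY i2 i2.
      have [y12 ->] := ImY i1 i2; have [y21 ->] := ImY i2 i1.
      rewrite -!(homM Hf) -!(homZ Hf) -(homB Hf) -(homZ Hf).
      by eexists.
    * by left.
    * by [].
  + by exists 0; rewrite (hom0 Hf).
- case=> v ->.
  pose c := deg0C (loc_gen z D D' iota Dinv).
  have xsP : forall r s, cP c (XL (fun r s => iota (z r s)) Dinv sr r s).
    move=> r s; rewrite /= /XL /gdeg0.
    pose j6 := @Ordinal 7 6 isT.
    have HJ : exists j : 'I_7, loc_gen z D D' iota Dinv j = iota (z r s) /\ loc_wt j = 1.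
      case: (I2_cases r) => ->; case: (I2_cases s) => ->.
      - by exists (@Ordinal 7 0 isT).
      - by exists (@Ordinal 7 1 isT).
      - by exists (@Ordinal 7 2 isT).
      - by exists (@Ordinal 7 3 isT).
    case: HJ => j [Gj wj].
    exists [:: (sr r, [:: j; j6])]; split.
      by rewrite /= !big_cons big_nil wj.
    by rewrite big_seq1 !big_cons big_nil mulr1 /= Gj.
  pose xs := fun r s => (SubP (xsP r s) : subP c).
  have HRs : MIRel q xs.
    apply: (MIRel_reflect (sv_hom c) (@sub_ext _ _ c)); exact: HXL.
  have [[f' [Hf' f'x]] _] := HIU _ xs HRs.
  have Hsf : forall v, sv (f' v) = f v.
    apply: (funiq (@sv _ _ c \o f') f (comp_hom Hf' (sv_hom c)) Hf) => r s /=.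
    by rewrite f'x fx.
  rewrite -Hsf; exact: (svP (f' v)).
Qed.

Lemma MRel_T (K : fieldType) (B : algType K) (p q : K) (z : 'I_2 -> 'I_2 -> B) (D D' : B) :
  MRel p q z D D' -> MRel p^-1 q (fun r s => z s r) D' D.
Proof.
move=> [[c1 c2 c3 c4 c5] det [d1 d2 d3 d4] [e1 e2 e3 e4] [f1 f2]] /=.
split; [split|idtac|split|split|split]; rewrite ?invrK //.
- by rewrite -c5.
- by rewrite -c5 f2 f1.
Qed.

Lemma MRel_T' (K : fieldType) (B : algType K) (p q : K) (z : 'I_2 -> 'I_2 -> B) (D D' : B) :
  MRel p^-1 q (fun r s => z s r) D' D -> MRel p q z D D'.
Proof. by move/MRel_T; rewrite invrK. Qed.

Lemma presM_T (K : fieldType) (p q : K) (A : algType K) (z : 'I_2 -> 'I_2 -> A) (D D' : A) :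
  is_M_presentation p q z D D' -> is_M_presentation p^-1 q (fun r s => z s r) D' D.
Proof.
case=> HM HU; split; first exact: MRel_T.
move=> B zB DB D'B HB.
have HB' := MRel_T' HB.
have [[f [Hf [fz [fD fD']]]] fu] := HU B _ _ _ HB'.
split; first by exists f.
move=> g h Hg Hh ghz ghD' ghD; apply: fu => // r s; exact: ghz.
Qed.

Lemma pres4_T (K : fieldType) (q : K) (AJ : algType K) (y : 'I_2 -> 'I_2 -> AJ) :
  is_presentation4 (@MJRel K q) y -> is_presentation4 (@MIRel K q) (fun r s => y s r).
Proof.
case=> HR HU; split; first exact: HR.
move=> B xB HB.
have [[f [Hf fy]] fu] := HU B (fun r s => xB s r) HB.
split; first by exists f.
move=> g h Hg Hh ghy; apply: fu => // r s; exact: ghy.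
Qed.

Definition perm7 (i : 'I_7) : 'I_7 :=
  match val i with
  | 1 => @Ordinal 7 2 isT
  | 2 => @Ordinal 7 1 isT
  | 4 => @Ordinal 7 5 isT
  | 5 => @Ordinal 7 4 isT
  | _ => i
  end.

Lemma gdeg0_perm (K : fieldType) (L : algType K) (G G' : 'I_7 -> L) (pi : 'I_7 -> 'I_7) u :
  (forall i, G' (pi i) = G i) -> (forall i, loc_wt (pi i) = loc_wt i) ->
  gdeg0 G u -> gdeg0 G' u.
Proof.
move=> hG hw [ws [h ->]]; exists [seq (t.1, map pi t.2) | t <- ws]; split.
  rewrite all_map; apply: sub_all h => t /=.
  by rewrite big_map (eq_bigr _ (fun i _ => hw i)).
rewrite big_map; apply: eq_bigr => t _ /=.
by rewrite big_map (eq_bigr _ (fun i _ => hG i)).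
Qed.

Lemma qpar_neq0 : qpar != 0.
Proof. by rewrite /qpar tofrac_eq0 polyX_eq0. Qed.

Unset Implicit Arguments.

Theorem proposition4p2
  (p : Kq) (hp : p = qpar \/ p = qpar^-1)
  (A : algType Kq) (z : 'I_2 -> 'I_2 -> A) (D D' : A)
  (HA : is_M_presentation p qpar z D D')
  (AI : algType Kq) (x : 'I_2 -> 'I_2 -> AI)
  (HI : is_presentation4 (@MIRel Kq qpar) x)
  (AJ : algType Kq) (y : 'I_2 -> 'I_2 -> AJ)
  (HJ : is_presentation4 (@MJRel Kq qpar) y)
  (L : algType Kq) (iota : A -> L) (Dinv : L)
  (HL : is_localization D iota Dinv)
  (L' : algType Kq) (iota' : A -> L') (D'inv : L')
  (HL' : is_localization D' iota' D'inv) :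
  (exists f : AI -> L,
     [/\ is_alg_hom f, injective f,
         (forall r s, f (x r s) = sqrtcD p qpar r s *: (iota (z r s) * Dinv)) &
         (forall u : L, loc_deg0 z D D' iota Dinv u <-> exists v, u = f v)])
  /\
  (exists g : AJ -> L',
     [/\ is_alg_hom g, injective g,
         (forall r s, g (y r s) = sqrtcD' p qpar r s *: (iota' (z r s) * D'inv)) &
         (forall u : L', loc_deg0 z D D' iota' D'inv u <-> exists v, u = g v)]).
Proof.
have hq := qpar_neq0.
have hp0 : p != 0 by case: hp => ->; rewrite ?invr_eq0.
have hs : forall r, sqrtcD p qpar r i1 != 0.
  move=> r; rewrite /sqrtcD; case: (p == qpar); case: (r == i1);
    rewrite ?oner_eq0 ?invr_eq0 //.
have hs' : forall s, sqrtcD' p qpar i1 s != 0.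
  move=> s; rewrite /sqrtcD'; case: (p == qpar); case: (s == i1);
    rewrite ?oner_eq0 ?invr_eq0 //.
split.
- have [f [Hf finj fx fdeg]] := core_main hp0 hq hs HA HI HL.
  by exists f; split => //.
- have hpi : p^-1 != 0 by rewrite invr_eq0.
  have [g [Hg ginj gy gdeg]] := core_main hpi hq hs' (presM_T HA) (pres4_T HJ) HL'.
  exists g; split => //.
  move=> u; rewrite -gdeg; split.
  + move=> H.
    apply: (@gdeg0_perm _ _ (loc_gen z D D' iota' D'inv)
              (loc_gen (fun r s => z s r) D' D iota' D'inv) perm7 _ _ _ H).
    * by case=> [[|[|[|[|[|[|[|n]]]]]]] Hi].
    * by case=> [[|[|[|[|[|[|[|n]]]]]]] Hi].
  + move=> H.
    apply: (@gdeg0_perm _ _ (loc_gen (fun r s => z s r) D' D iota' D'inv)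
              (loc_gen z D D' iota' D'inv) perm7 _ _ _ H).
    * by case=> [[|[|[|[|[|[|[|n]]]]]]] Hi].
    * by case=> [[|[|[|[|[|[|[|n]]]]]]] Hi].
Qed.
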